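(* Let $A$, $W$, $L$, $\{M_x\}$, $\{L_x\}$ be as in the context, satisfying Axioms 1–13, let $X$ be the set of $\sim$-classes of $L$, let $\varphi_x:X\to X$ ($x\in A$) be the invertible maps with $[u]\varphi_x=[v]\iff(u,v)\in L_x$ for $u,v\in L$, and let $H$ be the group generated by the maps $\varphi_x$ under composition, acting on $X$ on the right. Then the action of $H$ on $X$ is transitive.
   Context: $A$ is a finite alphabet, $A^\ast$ its finite words, $\epsilon$ the empty word. $W$ is a finite state automaton with $L=L(W)$, and for each $x\in A\sqcup\{\epsilon\}$, $M_x$ is a two-tape bounded asynchronous automaton over $A$ with $L_x=L(M_x)$. (A two-tape asynchronous automaton is a partial deterministic finite state automaton over $A\sqcup\{\$\}$ with states partitioned into $S_L,S_R$; it accepts $(u,v)$ iff some shuffle of $(u\$,v\$)$ is read along a path from the start state to an accept state with letters of $u\$$ read in $S_L$-states and letters of $v\$$ in $S_R$-states. It is bounded with constant $k$ if it never reads more than $k$ letters in a row from one tape.) The axioms (variables over $A^\ast$): (1) $\exists w\,(w\in L)$; (2) for $x\in A\cup\{\epsilon\}$, $(w,v)\in L_x\Rightarrow w,v\in L$; (3) $w\in L\Rightarrow(w,w)\in L_\epsilon$; (4) $(u,v)\in L_\epsilon\Rightarrow(v,u)\in L_\epsilon$; (5) $(u,v),(v,w)\in L_\epsilon\Rightarrow(u,w)\in L_\epsilon$; and for each $x\in A$: (6) $u\in L\Rightarrow\exists v\,(u,v)\in L_x$; (7) $(u,v)\in L_x\wedge(v,w)\in L_\epsilon\Rightarrow(u,w)\in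 L_x$; (8) $(u,v)\in L_\epsilon\wedge(u,w)\in L_x\Rightarrow(v,w)\in L_x$; (9) $v\in L\Rightarrow\exists u\,(u,v)\in L_x$; (10) $(u,v)\in L_x\wedge(u,w)\in L_\epsilon\Rightarrow(w,v)\in L_x$; (11) $(u,v)\in L_\epsilon\wedge(w,u)\in L_x\Rightarrow(w,v)\in L_x$. For $w=\sigma_1\cdots\sigma_n$ ($\sigma_i\in A$), $[v]\varphi_w=[u]$ abbreviates $\exists v_1,\ldots,v_{n-1}:(v,v_1)\in L_{\sigma_1}\wedge\cdots\wedge(v_{n-1},u)\in L_{\sigma_n}$ (for empty $w$: $(v,u)\in L_\epsilon$). (12) $\forall u,w,w'\,((uw\in L\wedge uw'\in L)\Rightarrow\forall v\,([v]\varphi_w=[uw]\iff[v]\varphi_{w'}=[uw']))$; (13) with $c$ the maximum number of states of $W$, $M_\epsilon$, the $M_x$, and $k$ the largest boundedness constant of the $M_x$, $M_\epsilon$: for each word $w$ over $A$ of length at most $2c+2k$, $\exists u\,([u]\varphi_w=[u])\Rightarrow\forall u\,([u]\varphi_w=[u])$. The relation $u\sim v\iff(u,v)\in L_\epsilon$ is an equivalence relation on $L$, with classes $[u]$. *)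

(* Defs.v *)
From mathcomp Require Import all_boot.
Set Implicit Arguments. Unset Strict Implicit. Unset Printing Implicit Defensive.

Record dfa (A : Type) := DFA {
  d_state : finType;
  d_start : d_state;
  d_acc   : pred d_state;
  d_trans : d_state -> A -> option d_state }.

Fixpoint d_run (A : Type) (D : dfa A) (s : d_state D) (w : seq A)
  : option (d_state D) :=
  match w with
  | [::] => Some s
  | a :: w' => match d_trans s a with Some s' => d_run s' w' | None => None end
  end.

Definition dfa_lang (A : Type) (D : dfa A) (w : seq A) : Prop :=
  match d_run (d_start D) w with Some s => d_acc s = true | None => False end.

(* Alphabet A ⊔ {$} is [option A], with None = $.  States with
   [t_left s = true] form S_L (read the left tape), the others S_R. *)
Record tta (A : Type) := TTA {
  t_state : finType;
  t_left  : pred t_state;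
  t_start : t_state;
  t_acc   : pred t_state;
  t_trans : t_state -> option A -> option t_state }.

(* configuration: current state, unread part of left tape, of right tape *)
Definition tconf (A : Type) (M : tta A) :=
  (t_state M * seq (option A) * seq (option A))%type.

Definition tape (A : Type) (u : seq A) : seq (option A) := rcons (map Some u) None.

(* one reading step; the boolean says which tape is read (true = left) *)
Inductive tstep (A : Type) (M : tta A) : bool -> tconf M -> tconf M -> Prop :=
| tstepL (s : t_state M) a l r s' :
    t_left s -> t_trans s a = Some s' -> tstep true (s, a :: l, r) (s', l, r)
| tstepR (s : t_state M) a l r s' :
    ~~ t_left s -> t_trans s a = Some s' -> tstep false (s, l, a :: r) (s', l, r).

Inductive treach (A : Type) (M : tta A) : tconf M -> tconf M -> Prop :=
| treach_refl c : treach c c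
| treach_step b c c' c'' : tstep b c c' -> treach c' c'' -> treach c c''.

Definition tinit (A : Type) (M : tta A) (u v : seq A) : tconf M :=
  (t_start M, tape u, tape v).

Definition tta_lang (A : Type) (M : tta A) (u v : seq A) : Prop :=
  exists s, treach (tinit M u v) (s, [::], [::]) /\ t_acc s = true.

Inductive tsame (A : Type) (M : tta A) (b : bool) : nat -> tconf M -> Prop :=
| tsame0 c : tsame b 0 c
| tsameS n c c' : tstep b c c' -> tsame b n c' -> tsame b n.+1 c.

Definition tta_bounded (A : Type) (M : tta A) (k : nat) : Prop :=
  forall (u v : seq A) (c : tconf M), treach (tinit M u v) c ->
    forall b : bool, ~ tsame b k.+1 c.

Section AxSec.
Variable A : Type.
Variable L : seq A -> Prop.
(* Lx None = L_epsilon, Lx (Some x) = L_x *)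
Variable Lx : option A -> seq A -> seq A -> Prop.

(* [v] phi_w = [u] *)
Fixpoint phi_chain (w : seq A) (v u : seq A) : Prop :=
  match w with
  | [::] => Lx None v u
  | s :: w' =>
      match w' with
      | [::] => Lx (Some s) v u
      | _ :: _ => exists v1, Lx (Some s) v v1 /\ phi_chain w' v1 u
      end
  end.

Definition Axm1 := exists w, L w.
Definition Axm2 := forall (x : option A) w v, Lx x w v -> L w /\ L v.
Definition Axm3 := forall w, L w -> Lx None w w.
Definition Axm4 := forall u v, Lx None u v -> Lx None v u.
Definition Axm5 := forall u v w, Lx None u v -> Lx None v w -> Lx None u w.
Definition Axm6 := forall (x : A) u, L u -> exists v, Lx (Some x) u v.
Definition Axm7 := forall (x : A) u v w, Lx (Some x) u v -> Lx None v w -> Lx (Some x) u w.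
Definition Axm8 := forall (x : A) u v w, Lx None u v -> Lx (Some x) u w -> Lx (Some x) v w.
Definition Axm9 := forall (x : A) v, L v -> exists u, Lx (Some x) u v.
Definition Axm10 := forall (x : A) u v w, Lx (Some x) u v -> Lx None u w -> Lx (Some x) w v.
Definition Axm11 := forall (x : A) u v w, Lx None u v -> Lx (Some x) w u -> Lx (Some x) w v.
Definition Axm12 := forall u w w', L (u ++ w) -> L (u ++ w') ->
  forall v, phi_chain w v (u ++ w) <-> phi_chain w' v (u ++ w').
Definition Axm13 (bound : nat) := forall w : seq A, size w <= bound ->
  (exists u, phi_chain w u u) -> forall u, L u -> phi_chain w u u.

Definition Hyps_1_13 (bound : nat) :=
  Axm1 /\ Axm2 /\ Axm3 /\ Axm4 /\ Axm5 /\ Axm6 /\ Axm7 /\ Axm8 /\ Axm9 /\ Axm10 /\ Axm11 /\ Axm12 /\ Axm13 bound.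

(* the class [u] as a set of words *)
Definition cls (u : seq A) : seq A -> Prop := fun v => Lx None u v.
Definition isClass (S : seq A -> Prop) : Prop := exists u, L u /\ S = cls u.

(* S phi_x = T (b = true) or S phi_x^{-1} = T (b = false) *)
Definition gen_act (x : A) (b : bool) (S T : seq A -> Prop) : Prop :=
  exists u v, [/\ L u, L v, S = cls u, T = cls v &
    (if b then Lx (Some x) u v else Lx (Some x) v u)].

(* right action of the element of H given by a word in the generators
   phi_x^{+-1}: S (g1 g2 ... gn) = T, applying g1 first *)
Fixpoint word_act (h : seq (A * bool)) (S T : seq A -> Prop) : Prop :=
  match h with
  | [::] => S = T
  | (x, b) :: h' => exists S', gen_act x b S S' /\ word_act h' S' T
  end.

Definition H_transitive : Prop :=
  forall S T, isClass S -> isClass T -> exists h, word_act h S T.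
End AxSec.

Definition cmax (A : finType) (W : dfa A) (M : option A -> tta A) : nat :=
  maxn #|d_state W| (\max_(x : option A) #|t_state (M x)|).

(* Main.v *)
Require Import Defs.
From mathcomp Require Import all_boot.
From Stdlib Require Import FunctionalExtensionality PropExtensionality.

Section Aux.
Variable A : Type.
Variable L : seq A -> Prop.
Variable Lx : option A -> seq A -> seq A -> Prop.
Hypothesis h2 : Axm2 L Lx.
Hypothesis h3 : Axm3 L Lx.
Hypothesis h4 : Axm4 Lx.
Hypothesis h5 : Axm5 Lx.
Hypothesis h9 : Axm9 L Lx.

Lemma cls_eq v t : Lx None v t -> cls Lx v = cls Lx t.
Proof.
move=> H; apply: functional_extensionality => z; apply: propositional_extensionality.
rewrite /cls; split=> Hz; [exact: h5 _ _ _ (h4 _ _ H) Hz | exact: h5 _ _ _ H Hz].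
Qed.

Lemma chain_act w : forall v t, phi_chain Lx w v t ->
  word_act L Lx (map (fun x => (x, true)) w) (cls Lx v) (cls Lx t).
Proof.
elim: w => [|s w IH] v t /=.
  exact: cls_eq.
case: w IH => [|s' w'] IH /=.
  move=> H; exists (cls Lx t); split=> //.
  have [Lv Lt] := h2 _ _ _ H.
  by exists v, t.
move=> [v1 [H1 H2]]; exists (cls Lx v1); split; last exact: IH.
have [Lv Lv1] := h2 _ _ _ H1.
by exists v, v1.
Qed.

Lemma chain_ex w : forall t, L t -> exists v, L v /\ phi_chain Lx w v t.
Proof.
elim: w => [|s w IH] t Lt /=.
  by exists t; split=> //; apply: h3.
case: w IH => [|s' w'] IH.
  have [u Hu] := h9 s t Lt; exists u; split=> //; exact: (h2 _ _ _ Hu).1.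
have [v1 [Lv1 Hv1]] := IH t Lt.
have [u Hu] := h9 s v1 Lv1; exists u; split; first exact: (h2 _ _ _ Hu).1.
by exists v1.
Qed.

Lemma word_cat h1 : forall h2 S T U, word_act L Lx h1 S T -> word_act L Lx h2 T U ->
  word_act L Lx (h1 ++ h2) S U.
Proof.
elim: h1 => [|[x b] h IH] h2' S T U /=.
  by move=> ->.
move=> [S' [G W]] W2; exists S'; split=> //; exact: IH W W2.
Qed.

Definition winv (h : seq (A * bool)) := rev (map (fun p => (p.1, ~~ p.2)) h).

Lemma word_inv h : forall S T, word_act L Lx h S T -> word_act L Lx (winv h) T S.
Proof.
elim: h => [|[x b] h IH] S T /=.
  by move=> ->.
move=> [S' [G W]].
rewrite /winv /= rev_cons -cats1.
apply: word_cat (IH _ _ W) _ => /=.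
exists S; split=> //.
move: G => [u [v [Lu Lv eS eT Hx]]].
exists v, u; split=> //.
by case: b Hx.
Qed.
End Aux.

Theorem mainTheorem10 (A : finType) (W : dfa A) (M : option A -> tta A)
    (kb : option A -> nat) :
  (forall x : option A, tta_bounded (M x) (kb x)) ->
  Hyps_1_13 (dfa_lang W) (fun x => tta_lang (M x))
    (2 * cmax W M + 2 * \max_(x : option A) kb x) ->
  H_transitive (dfa_lang W) (fun x => tta_lang (M x)).
Proof.
move=> _ [h1 [h2 [h3 [h4 [h5 [_ [_ [_ [h9 [_ [_ [h12 _]]]]]]]]]]]].
move=> S T [s [Ls ->]] [t [Lt ->]].
have [w0 Lw0] := h1.
have [v [Lv Hv]] := @chain_ex _ _ _ h2 h3 h9 w0 w0 Lw0.
have key : forall w, dfa_lang W w -> phi_chain (fun x => tta_lang (M x)) w v w.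
  move=> w Lw; exact: (proj1 (h12 [::] w0 w Lw0 Lw v) Hv).
have As := @chain_act _ _ _ h2 h4 h5 _ _ _ (key s Ls).
have At := @chain_act _ _ _ h2 h4 h5 _ _ _ (key t Lt).
eexists; exact: (@word_cat _ _ _ _ _ _ _ _ (@word_inv _ _ _ _ _ _ As) At).
Qed.
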